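(* For every even integer $n \ge 2$ and every $\epsilon$ with $0<\epsilon<\tfrac{1}{2}$, consider the instance with $n+1$ bamboos and growth rates $h(1)=1$, $h(2)=\cdots=h(n+1)=\tfrac12+\epsilon$. For this instance $H^{PW}=n+1$ and $H^*\le \tfrac{n}{2}+1+(n+2)\epsilon$. Consequently, $\sup H^{PW}/H^* \ge 2$, the supremum being taken over all instances; that is, the approximation ratio $2$ of algorithm PW is asymptotically tight.
   Context: An instance consists of an integer $n\ge 1$ and growth rates $1=h(1)\ge h(2)\ge\cdots\ge h(n)>0$ of bamboos $b_1,\dots,b_n$. Bamboo Garden Trimming (discrete version): - All heights are $0$ initially. - On each day $t=1,2,\dots$ every bamboo $b_j$ grows by $h(j)$. - At the end of each day the gardener cuts exactly one bamboo $\sigma(t)\in\{1,\dots,n\}$ back to height $0$. The height of a schedule $\sigma:\mathbb{N}\to\{1,\dots,n\}$ is the supremum, over all days $t$ and all $j$, of the height of $b_j$ at the end of day $t$ just before the cut. $H^*$ denotes the infimum of this height over all schedules. Algorithm PW: - For each $j$, let $h'(j)=2^{-k}$, where $k\ge 0$ is the integer with $2^{-(k+1)}<h(j)\le 2^{-k}$. - Bamboos are grouped into $\alpha=\lceil\sum_{j=1}^n h'(j)\rceil$ partitions, with rounded growths summing to at most $1$ in each partition. - The partitions are served cyclically. - Its value is $H^{PW}=\alpha\cdot h(1)=\lceil\sum_{j=1}^n h'(j)\rceil$. *)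

(* Defs.v *)
From Stdlib Require Import Reals Lra Lia Arith ClassicalEpsilon.
Open Scope R_scope.

(** An instance: n bamboos b_1..b_n with growth rates h 1, ..., h n
    (values of h outside 1..n are irrelevant). *)
Definition valid_instance (n : nat) (h : nat -> R) : Prop :=
  (1 <= n)%nat /\ h 1%nat = 1 /\
  (forall j, (1 <= j < n)%nat -> h (S j) <= h j) /\
  0 < h n.

(** A schedule: sigma t is the bamboo cut at the end of day t (t >= 1). *)
Definition valid_schedule (n : nat) (sigma : nat -> nat) : Prop :=
  forall t, (1 <= t)%nat -> (1 <= sigma t <= n)%nat.

(** Height of b_j at the end of day t, after the cut of day t
    (day 0 = initial state, all heights 0). *)
Fixpoint post_height (h : nat -> R) (sigma : nat -> nat) (j t : nat) : R :=
  match t with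
  | O => 0
  | S t' => if Nat.eqb (sigma (S t')) j then 0
            else post_height h sigma j t' + h j
  end.

(** Height of b_j at the end of day t (t >= 1), just before the cut. *)
Definition pre_height (h : nat -> R) (sigma : nat -> nat) (j t : nat) : R :=
  post_height h sigma j (pred t) + h j.

Definition sched_height_le (n : nat) (h : nat -> R) (sigma : nat -> nat)
    (M : R) : Prop :=
  forall t j, (1 <= t)%nat -> (1 <= j <= n)%nat -> pre_height h sigma j t <= M.

(** "H^* <= b": the infimum over all schedules of their heights is <= b. *)
Definition Hstar_le (n : nat) (h : nat -> R) (b : R) : Prop :=
  forall delta, 0 < delta ->
    exists sigma, valid_schedule n sigma /\ sched_height_le n h sigma (b + delta).

(** PW rounding: the exponent k >= 0 with 2^-(k+1) < x <= 2^-k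
    (chosen by the choice operator; unique when 0 < x <= 1). *)
Definition pw_exp (x : R) : nat :=
  epsilon (inhabits 0%nat) (fun k => / 2 ^ (S k) < x <= / 2 ^ k).

Definition pw_round (x : R) : R := / 2 ^ (pw_exp x).

Definition Rceil (x : R) : Z := (- Int_part (- x))%Z.

Definition pw_alpha (n : nat) (h : nat -> R) : Z :=
  Rceil (sum_f_R0 (fun i => pw_round (h (S i))) (pred n)).

Definition HPW (n : nat) (h : nat -> R) : R := IZR (pw_alpha n h) * h 1%nat.

Definition tight_rates (eps : R) (j : nat) : R :=
  if Nat.eqb j 1 then 1 else / 2 + eps.

(* Main.v *)
Require Import Defs.
From Stdlib Require Import Reals Arith Lia Lra ClassicalEpsilon.
Open Scope R_scope.

Lemma post_bound h sigma j : 0 <= h j -> forall t k,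
  ((t <= k)%nat \/ exists s, (1 <= s <= t)%nat /\ (t <= s + k)%nat /\ sigma s = j) ->
  post_height h sigma j t <= INR k * h j.
Proof.
  intros Hh t. induction t as [|t IH]; intros k Hc; simpl.
  - apply Rmult_le_pos; [apply pos_INR|lra].
  - destruct (Nat.eqb (sigma (S t)) j) eqn:E.
    + apply Rmult_le_pos; [apply pos_INR|lra].
    + apply Nat.eqb_neq in E.
      destruct k as [|k].
      * exfalso. destruct Hc as [Hc|[s [H1 [H2 H3]]]]; [lia|].
        assert (s = S t) by lia. subst. contradiction.
      * rewrite S_INR. assert (post_height h sigma j t <= INR k * h j); [|lra].
        apply IH. destruct Hc as [Hc|[s [H1 [H2 H3]]]]; [left; lia|].
        destruct (Nat.eq_dec s (S t)); [subst; contradiction|].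
        right. exists s. repeat split; lia || auto.
Qed.

Definition sched (m t : nat) : nat :=
  if Nat.eqb (t mod S m) 0 then 1%nat
  else if Nat.even (t / S m) then (t mod S m + 1)%nat else (t mod S m + S m)%nat.

Lemma sched_eq m Q u : (u < S m)%nat ->
  sched m (Q * S m + u) = if Nat.eqb u 0 then 1%nat
     else if Nat.even Q then (u + 1)%nat else (u + S m)%nat.
Proof.
  intros Hu. unfold sched.
  rewrite <- (Nat.mod_unique (Q * S m + u) (S m) Q u Hu) by lia.
  rewrite <- (Nat.div_unique (Q * S m + u) (S m) Q u Hu) by lia.
  reflexivity.
Qed.

Lemma decomp m t : exists Q u : nat, (u < S m)%nat /\ t = (Q * S m + u)%nat.
Proof.
  exists (t / S m)%nat, (t mod S m)%nat. split.
  - apply Nat.mod_upper_bound; lia.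
  - pose proof (Nat.div_mod t (S m)). lia.
Qed.

Lemma parity_pick A b : (1 <= A)%nat -> exists Q : nat, (Q = A \/ Q = A - 1)%nat /\ Nat.even Q = b.
Proof.
  intros HA. destruct (Bool.bool_dec (Nat.even A) b) as [e|e].
  - exists A; auto.
  - exists (A - 1)%nat. split; [auto|].
    destruct A as [|A]; [lia|]. replace (S A - 1)%nat with A by lia.
    rewrite Nat.even_succ, <- Nat.negb_even in e.
    destruct (Nat.even A), b; simpl in *; congruence.
Qed.

Lemma sched_valid m : valid_schedule (S (2 * m)) (sched m).
Proof.
  intros t _. destruct (decomp m t) as [Q [u [Hu ->]]].
  rewrite sched_eq by exact Hu.
  destruct (Nat.eqb u 0) eqn:E; [lia|]. apply Nat.eqb_neq in E.
  destruct (Nat.even Q); lia.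
Qed.

Lemma cond1 m t : ((t <= m)%nat \/ exists s, (1 <= s <= t)%nat /\ (t <= s + m)%nat /\ sched m s = 1%nat).
Proof.
  destruct (decomp m t) as [Q [u [Hu ->]]].
  destruct Q as [|Q]; [left; lia|].
  right. exists (S Q * S m + 0)%nat. split; [nia|]. split; [nia|].
  rewrite sched_eq by lia. reflexivity.
Qed.

Lemma condj m t j : (2 <= j <= S (2 * m))%nat ->
  ((t <= 2 * m + 1)%nat \/ exists s, (1 <= s <= t)%nat /\ (t <= s + (2 * m + 1))%nat /\ sched m s = j).
Proof.
  intros Hj.
  set (uj := if Nat.leb j (S m) then (j - 1)%nat else (j - S m)%nat).
  set (bj := Nat.leb j (S m)).
  assert (Huj : (1 <= uj < S m)%nat).
  { unfold uj. destruct (Nat.leb j (S m)) eqn:E;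
    [apply Nat.leb_le in E|apply Nat.leb_gt in E]; lia. }
  destruct (decomp m t) as [q [v [Hv ->]]].
  destruct (le_lt_dec q 1) as [Hq|Hq]; [left; nia|right].
  destruct (le_lt_dec uj v) as [Huv|Huv].
  - destruct (parity_pick q bj) as [Q [HQ HQb]]; [lia|].
    exists (Q * S m + uj)%nat.
    split; [destruct HQ; subst; nia|]. split; [destruct HQ; subst; nia|].
    rewrite sched_eq by lia. destruct (Nat.eqb uj 0) eqn:E; [apply Nat.eqb_eq in E; lia|].
    rewrite HQb. unfold bj, uj. destruct (Nat.leb j (S m)) eqn:E2;
    [apply Nat.leb_le in E2|apply Nat.leb_gt in E2]; lia.
  - destruct (parity_pick (q - 1) bj) as [Q [HQ HQb]]; [lia|].
    exists (Q * S m + uj)%nat.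
    split; [destruct HQ; subst; nia|]. split; [destruct HQ; subst; nia|].
    rewrite sched_eq by lia. destruct (Nat.eqb uj 0) eqn:E; [apply Nat.eqb_eq in E; lia|].
    rewrite HQb. unfold bj, uj. destruct (Nat.leb j (S m)) eqn:E2;
    [apply Nat.leb_le in E2|apply Nat.leb_gt in E2]; lia.
Qed.

Lemma pw_round_1 x : / 2 < x <= 1 -> pw_round x = 1.
Proof.
  intros Hx. unfold pw_round, pw_exp.
  set (P := fun k : nat => / 2 ^ S k < x <= / 2 ^ k).
  assert (HP : P (epsilon (inhabits 0%nat) P)).
  { apply epsilon_spec. exists 0%nat. unfold P. simpl. rewrite Rmult_1_r, Rinv_1. lra. }
  destruct (epsilon (inhabits 0%nat) P) as [|k]; [simpl; apply Rinv_1|].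
  exfalso. unfold P in HP. simpl in HP.
  assert (1 <= 2 ^ k) by (apply pow_R1_Rle; lra).
  assert (/ (2 * 2 ^ k) <= / 2) by (apply Rinv_le_contravar; lra).
  lra.
Qed.

Lemma sum_ones eps n : 0 < eps < / 2 ->
  sum_f_R0 (fun i => pw_round (tight_rates eps (S i))) n = INR (S n).
Proof.
  intros He.
  assert (Ht : forall i, pw_round (tight_rates eps (S i)) = 1).
  { intros i. apply pw_round_1. unfold tight_rates.
    destruct (Nat.eqb (S i) 1); lra. }
  induction n as [|n IH]; simpl sum_f_R0.
  - rewrite Ht. simpl. reflexivity.
  - rewrite IH, Ht. rewrite (S_INR (S n)). reflexivity.
Qed.

Lemma Rceil_nat n : Rceil (INR n) = Z.of_nat n.
Proof.
  unfold Rceil, Int_part. rewrite INR_IZR_INZ, <- opp_IZR.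
  rewrite <- (up_tech (IZR (- Z.of_nat n)) (- Z.of_nat n)%Z).
  - lia.
  - lra.
  - rewrite plus_IZR. lra.
Qed.

Lemma part1 (n : nat) (eps : R) :
      Nat.Even n -> (2 <= n)%nat -> 0 < eps < / 2 ->
      valid_instance (S n) (tight_rates eps) /\
      HPW (S n) (tight_rates eps) = INR (S n) /\
      Hstar_le (S n) (tight_rates eps) (INR n / 2 + 1 + (INR n + 2) * eps).
Proof.
  intros [m Hm] Hn He.
  split; [|split].
  - unfold valid_instance, tight_rates. split; [lia|]. split; [reflexivity|].
    split.
    + intros j Hj. destruct (Nat.eqb (S j) 1) eqn:E1; [apply Nat.eqb_eq in E1; lia|].
      destruct (Nat.eqb j 1); lra.
    + destruct (Nat.eqb (S n) 1); lra.
  - unfold HPW, pw_alpha. simpl pred. rewrite sum_ones by exact He.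
    rewrite Rceil_nat. unfold tight_rates. simpl Nat.eqb. rewrite Rmult_1_r.
    rewrite <- INR_IZR_INZ. reflexivity.
  - intros delta Hd. exists (sched m). subst n. split; [apply sched_valid|].
    intros t j Ht Hj. unfold pre_height.
    assert (Hm2 : INR (2 * m) = 2 * INR m) by (rewrite mult_INR; simpl; lra).
    rewrite Hm2.
    destruct (Nat.eq_dec j 1) as [->|Hj1].
    + pose proof (post_bound (tight_rates eps) (sched m) 1 ltac:(unfold tight_rates; simpl; lra)
         (pred t) m (cond1 m (pred t))) as B.
      unfold tight_rates in *. simpl Nat.eqb in *.
      assert (0 <= INR m) by apply pos_INR.
      nra.
    + pose proof (post_bound (tight_rates eps) (sched m) j
         ltac:(unfold tight_rates; destruct (Nat.eqb j 1); lra)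
         (pred t) (2 * m + 1) (condj m (pred t) j ltac:(lia))) as B.
      unfold tight_rates in *. destruct (Nat.eqb j 1) eqn:E; [apply Nat.eqb_eq in E; lia|].
      rewrite plus_INR, mult_INR in B. simpl in B.
      nra.
Qed.

Theorem lemma1 :
  (forall (n : nat) (eps : R),
      Nat.Even n -> (2 <= n)%nat -> 0 < eps < / 2 ->
      valid_instance (S n) (tight_rates eps) /\
      HPW (S n) (tight_rates eps) = INR (S n) /\
      Hstar_le (S n) (tight_rates eps) (INR n / 2 + 1 + (INR n + 2) * eps))
  /\
  (forall c : R, c < 2 ->
      exists (n : nat) (h : nat -> R) (b : R),
        valid_instance n h /\ Hstar_le n h b /\ c * b < HPW n h).
Proof.
  split; [exact part1|].
  intros c Hc.
  destruct (INR_archimed (2 - c) 3 ltac:(lra)) as [N HN].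
  set (n := (2 * S N)%nat).
  assert (Hev : Nat.Even n) by (exists (S N); reflexivity).
  assert (Hn2 : (2 <= n)%nat) by (unfold n; lia).
  assert (HnR : INR n = 2 * INR N + 2).
  { unfold n. rewrite mult_INR, (S_INR N). simpl (INR 2). lra. }
  assert (HN0 : 0 <= INR N) by apply pos_INR.
  set (eps := / (4 * (INR n + 2))).
  assert (Heps : 0 < eps < / 2).
  { unfold eps. split; [apply Rinv_0_lt_compat; lra|].
    apply Rinv_lt_contravar; lra. }
  destruct (part1 n eps Hev Hn2 Heps) as [H1 [H2 H3]].
  exists (S n), (tight_rates eps), (INR n / 2 + 1 + (INR n + 2) * eps).
  split; [exact H1|]. split; [exact H3|]. rewrite H2, S_INR.
  assert (Hee : (INR n + 2) * eps = / 4) by (unfold eps; field; lra).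
  rewrite Hee.
  rewrite HnR.
  replace ((2 * INR N + 2) / 2 + 1 + / 4) with (INR N + 9 / 4) by field.
  destruct (Rle_lt_dec c 0) as [Hc0|Hc0]; [nra|].
  nra.
Qed.
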